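(* For every prime power $q\equiv 1\pmod 4$, the signified graph $Tr(SP_q)$ is vertex-transitive, i.e. for any two vertices $x,y$ there is a sign-preserving automorphism of $Tr(SP_q)$ mapping $x$ to $y$.
   Context: A signified graph is a simple graph with each edge labelled positive or negative. Let $q\equiv 1\pmod 4$ be a prime power and $\mathbb{F}_q$ the field of order $q$; for $x\in\mathbb{F}_q^*$ let $\mathrm{sq}(x)=+1$ if $x$ is a square and $-1$ otherwise (note $-1$ is a square). The signified Paley graph $SP_q$ is the complete graph on vertex set $\mathbb{F}_q$ where the edge $xy$ is negative iff $\mathrm{sq}(y-x)=-1$. The Tromp signified Paley graph $Tr(SP_q)$ has vertex set $\{u_i : u\in\mathbb{F}_q\cup\{\infty\},\ i\in\{0,1\}\}$ ($2q+2$ vertices). For $u,v\in\mathbb{F}_q$ and $i,j\in\{0,1\}$ with $u\neq v$, $u_iv_j$ is an edge with sign $\mathrm{sq}(u-v)\cdot(-1)^{i+j}$; for $v\in\mathbb{F}_q$, $\infty_iv_j$ is an edge with sign $(-1)^{i+j}$; there are no other edges (in particular $u_0u_1$ is never an edge). Equivalently, $Tr(SP_q)$ is the anti-twinned graph of $SP_q$ with an added universal vertex $\infty$ joined positively to all vertices. An automorphism of a signified graph is a bijection of its vertex set mapping edges to edges of the same sign and non-edges to non-edges. *)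

(* Defs.v *)
From HB Require Import structures.
From mathcomp Require Import all_boot all_order all_algebra all_field.
Set Implicit Arguments. Unset Strict Implicit. Unset Printing Implicit Defensive.
Import GRing.Theory.
Local Open Scope ring_scope.

(* A signified graph on a vertex type V is given by a function
   V -> V -> option bool : None = non-edge, Some true = positive edge,
   Some false = negative edge. *)

Definition is_sq (F : finFieldType) (x : F) : bool := [exists y : F, y * y == x].

(* Vertices of Tr(SP_q): u_i with u in F ∪ {∞} (None = ∞), i in {0,1} (false = 0). *)
Definition tr_vertex (F : finFieldType) := (option F * bool)%type.

Definition tr_sign (F : finFieldType) (x y : tr_vertex F) : option bool :=
  match x.1, y.1 with
  | Some u, Some v =>
      if u == v then None
      else Some (is_sq (u - v) == (x.2 == y.2))   (* sq(u-v) * (-1)^(i+j) = +1 *)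
  | Some _, None | None, Some _ => Some (x.2 == y.2) (* (-1)^(i+j) = +1 *)
  | None, None => None
  end.

Definition signified_aut (V : Type) (s : V -> V -> option bool) (f : V -> V) : Prop :=
  bijective f /\ forall x y, s (f x) (f y) = s x y.

(* Main.v *)
Require Import Defs.
From HB Require Import structures.
From mathcomp Require Import all_boot all_order all_algebra all_field all_fingroup all_solvable.
From mathcomp Require Import ring.
Set Implicit Arguments. Unset Strict Implicit. Unset Printing Implicit Defensive.
Import GRing.Theory.
Local Open Scope ring_scope.

Section Sq.
Variable F : finFieldType.
Hypothesis hq : (#|F| %% 4 = 1)%N.

Let n := (#|F|.-1)%N.

Lemma L1 (x : F) : x != 0 -> x ^+ n = 1.
Proof.
move=> x0; have := expf_card x.
rewrite -(ltn_predK (finNzRing_gt1 F)) exprSr -/n => /eqP.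
by rewrite -[X in _ == X]mul1r => /eqP /(mulIf x0).
Qed.

Lemma L2 : exists g : F, n.-primitive_root g.
Proof.
have n0 : (0 < n)%N by rewrite /n -ltnS (ltn_predK (finNzRing_gt1 F)) finNzRing_gt1.
have H1 : all n.-unity_root [seq x <- enum F | x != 0].
  by apply/allP => x; rewrite mem_filter => /andP[x0 _]; rewrite unity_rootE L1.
have H2 : uniq [seq x <- enum F | x != 0] by rewrite filter_uniq // enum_uniq.
have H3 : (n <= size [seq x <- enum F | x != 0%R])%N.
  rewrite size_filter /n -(cardC1 (0:F)) cardE /enum_mem size_filter.
  by rewrite count_filter; apply: eq_leq; apply: eq_count => x; rewrite !inE andbT.
have /hasP[g _ pg] := @has_prim_root F n _ n0 H1 H2 H3.
by exists g.
Qed.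

Let k := (#|F| %/ 4)%N.
Let m := (k * 2)%N.
Lemma nm : n = (m * 2)%N.
Proof. by rewrite /n /m /k {1}(divn_eq #|F| 4) hq addn1 /= -mulnA. Qed.

Lemma m_gt0 : (0 < m)%N.
Proof.
have := finNzRing_gt1 F; rewrite {1}(divn_eq #|F| 4) hq /m /k.
by case: (#|F| %/ 4)%N.
Qed.

Lemma euler (x : F) : x != 0 -> is_sq x = (x ^+ m == 1).
Proof.
move=> x0; apply/idP/idP.
- case/existsP => y /eqP yx; rewrite -yx -expr2 -exprM mulnC -nm L1 //.
  by apply: contraNneq x0 => y0; rewrite -yx y0 mul0r.
- move/eqP => xm; have [g pg] := L2.
  case: (prim_rootP pg (L1 x0)) => -[i _] /= xi.
  have : (n %| i * m)%N by rewrite (prim_order_dvd pg) exprM -xi xm.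
  have -> : n = (2 * m)%N by rewrite nm mulnC.
  rewrite dvdn_pmul2r ?m_gt0 // => /dvdnP[j ij].
  apply/existsP; exists (g ^+ j); rewrite xi ij -exprD addnn -mul2n mulnC //.
Qed.

Lemma sqpm (x : F) : x != 0 -> x ^+ m = 1 \/ x ^+ m = -1.
Proof.
move=> x0; have : (x ^+ m) ^+ 2 == 1 by rewrite -exprM -nm L1.
by rewrite sqrf_eq1 => /orP[] /eqP; [left|right].
Qed.

Lemma neg1 : (-1 : F) != 1.
Proof.
have [g pg] := L2.
have g0 : g != 0.
  apply/negP => /eqP g0; move: (prim_expr_order pg).
  by rewrite g0 expr0n nm muln_eq0 eqn0Ngt m_gt0 /= => /eqP; rewrite eq_sym oner_eq0.
have : g ^+ m != 1.
  rewrite -(prim_order_dvd pg) nm; apply/negP => /dvdn_leq; rewrite m_gt0 => /(_ isT).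
  by rewrite -{2}[m]muln1 leq_pmul2l ?m_gt0.
by case: (sqpm g0) => ->; rewrite ?eqxx // eq_sym.
Qed.

Lemma sqM (x y : F) : x != 0 -> y != 0 -> is_sq (x * y) = (is_sq x == is_sq y).
Proof.
move=> x0 y0; rewrite !euler ?mulf_neq0 // exprMn.
have n1 := neg1; have n1' : (1:F) != -1 by rewrite eq_sym.
by case: (sqpm x0) => ->; case: (sqpm y0) => ->;
  rewrite ?mul1r ?mulr1 ?mulrNN ?mulr1 ?eqxx ?(negbTE n1) ?(negbTE n1').
Qed.

Lemma sqN1 : is_sq (-1 : F).
Proof.
rewrite euler ?oppr_eq0 ?oner_eq0 // /m mulnC exprM.
by rewrite expr2 mulrNN mulr1 expr1n.
Qed.

Lemma sqN (x : F) : is_sq (- x) = is_sq x.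
Proof.
have [->|x0] := eqVneq x 0; first by rewrite oppr0.
by rewrite -mulN1r sqM ?oppr_eq0 ?oner_eq0 // sqN1.
Qed.

Lemma sqV (x : F) : x != 0 -> is_sq x^-1 = is_sq x.
Proof.
move=> x0; rewrite !euler ?invr_eq0 // exprVn invr_eq1 //.
Qed.

Definition tf (a : F) (b : bool) (x : tr_vertex F) : tr_vertex F :=
  (omap (fun u => u + a) x.1, x.2 (+) b).

Lemma tf_aut a b : signified_aut (@tr_sign F) (tf a b).
Proof.
split.
  by exists (tf (- a) b) => -[[u|] i]; rewrite /tf /= addbK ?addrK ?subrK.
move=> [[u|] i] [[v|] j]; rewrite /tr_sign /tf /=;
  try by case: i; case: j; case: b.
rewrite (inj_eq (addIr a)); case: eqP => // _.
have -> : u + a - (v + a) = u - v by rewrite opprD addrACA subrr addr0.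
by case: i; case: j; case: b.
Qed.

Definition tinv (x : tr_vertex F) : tr_vertex F :=
  match x.1 with
  | None => (Some 0, x.2)
  | Some u => if u == 0 then (None, x.2) else (Some u^-1, x.2 (+) ~~ is_sq u)
  end.

Lemma tinvK : involutive tinv.
Proof.
move=> [[u|] i]; rewrite /tinv /=; last by rewrite eqxx.
have [-> //|u0] := eqVneq u 0.
by rewrite /= invr_eq0 (negbTE u0) invrK sqV // -addbA addbb addbF.
Qed.

Lemma tinv_aut : signified_aut (@tr_sign F) tinv.
Proof.
split; first by exists tinv; apply: tinvK.
move=> [[u|] i] [[v|] j]; rewrite /tinv /tr_sign /=.
- case: (boolP (u == 0)) => u0; case: (boolP (v == 0)) => v0 /=.
  + by rewrite (eqP u0) (eqP v0) eqxx.
  + by rewrite (eqP u0) [0 == v]eq_sym (negbTE v0) sub0r sqN; case: i; case: j; case: (is_sq v).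
  + by rewrite (eqP v0) (negbTE u0) subr0; case: i; case: j; case: (is_sq u).
  rewrite (inj_eq (@invr_inj F)); case: eqP => // /eqP uv.
  have -> : u^-1 - v^-1 = (u - v) * - (u^-1 * v^-1).
    by field; rewrite u0 v0.
  rewrite sqM ?subr_eq0 ?oppr_eq0 ?mulf_neq0 ?invr_eq0 // sqN sqM ?invr_eq0 //.
  rewrite !sqV //.
  by case: i; case: j; case: (is_sq u); case: (is_sq v); case: (is_sq (u - v)).
- case: (boolP (u == 0)) => u0 //=.
  by rewrite invr_eq0 (negbTE u0) subr0 sqV //; case: i; case: j; case: (is_sq u).
- case: (boolP (v == 0)) => v0 //=.
  by rewrite eq_sym invr_eq0 (negbTE v0) sub0r sqN sqV //; case: i; case: j; case: (is_sq v).
- by rewrite eqxx.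
Qed.
End Sq.

Lemma aut_comp (V : Type) (s : V -> V -> option bool) f g :
  signified_aut s f -> signified_aut s g -> signified_aut s (f \o g).
Proof.
move=> [bf hf] [bg hg]; split; first exact: bij_comp.
by move=> x y /=; rewrite hf hg.
Qed.

Lemma aut_inv (V : Type) (s : V -> V -> option bool) f :
  signified_aut s f -> exists g, signified_aut s g /\ cancel f g.
Proof.
move=> [[g fg gf] hf]; exists g; split => //; split; first by exists f.
by move=> x y; rewrite -hf !gf.
Qed.

Lemma reach (F : finFieldType) (hq : (#|F| %% 4 = 1)%N) (x : tr_vertex F) :
  exists f, signified_aut (@tr_sign F) f /\ f (Some 0, false) = x.
Proof.
case: x => [[a|] b].
  exists (tf a b); split; first exact: tf_aut.
  by rewrite /tf /= add0r.
exists (tf 0 b \o @tinv F); split; first exact: aut_comp (tf_aut _ _) (tinv_aut hq).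
by rewrite /= /tinv /tf /= eqxx.
Qed.

Theorem mainTheorem5 (F : finFieldType) (hq : (#|F| %% 4 = 1)%N) :
  forall x y : tr_vertex F,
    exists f : tr_vertex F -> tr_vertex F,
      signified_aut (@tr_sign F) f /\ f x = y.
Proof.
move=> x y.
have [f [af fx]] := reach hq x.
have [g [ag fg]] := reach hq y.
have [f' [af' f'f]] := aut_inv af.
exists (g \o f'); split; first exact: aut_comp.
by rewrite /= -fx f'f.
Qed.
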